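(* Consider the real ODE system $$\frac{dp}{dt}=p\,(pR(v_c)-1),\qquad \frac{dv_c}{dt}=-\frac{p}{4}(1+v_c^2),\qquad R(v)=\frac12\left(\frac1v-v\right),$$ and let $\Omega=\{(v,p):v>0,\ -v^{-1}\le p\le v\}$. Then for every initial datum $(v_c(0),p(0))\in\Omega$ the solution satisfies $(v_c(t),p(t))\in\Omega$ for all $t>0$, and $v_c(t)$ cannot reach $0$ or $\infty$ at any finite time; hence the solution exists for all $0<t<\infty$.
   Context: This system is the form, with dissipation coefficient normalized to $\nu=1$, of the pole-dynamics ODEs for the generalized Constantin–Lax–Majda equation with $a=1/2$, $\sigma=0$, written in the variable $p=\omega_{-2,i}/(v_c(1-v_c^2))$. *)

(* Defs.v *)
From Stdlib Require Import Reals.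
From Coquelicot Require Import Coquelicot.
Open Scope R_scope.

Definition Rfun (v : R) : R := (/ v - v) / 2.

Definition Omega (v p : R) : Prop := 0 < v /\ - / v <= p /\ p <= v.

(* (vc, p) solves  dp/dt = p (p R(vc) - 1),  dvc/dt = -(p/4)(1+vc^2)
   on the time interval [0, T) (T possibly +oo): the equations hold for
   0 < t < T and both functions are right-continuous at t = 0. *)
Definition is_solution_on (T : Rbar) (vc p : R -> R) : Prop :=
  (forall t : R, 0 < t -> Rbar_lt t T ->
     is_derive p t (p t * (p t * Rfun (vc t) - 1)) /\
     is_derive vc t (- (p t / 4) * (1 + vc t ^ 2))) /\
  filterlim vc (at_right 0) (locally (vc 0)) /\
  filterlim p (at_right 0) (locally (p 0)).

(* Main.v *)
Require Import Defs.
From Stdlib Require Import Reals.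
From Coquelicot Require Import Coquelicot.
Open Scope R_scope.
From Stdlib Require Import Reals Lra Psatz.
From Coquelicot Require Import Coquelicot.
Open Scope R_scope.

Definition Gf (v : R) := atan v - v*(1-v^2)/(1+v^2)^2.
Definition h1 (v : R) := 4*v^2/(1+v^2)^2.
Definition Ff (v : R) := atan v - v/(1+v^2).
Definition Ef (v : R) := atan v + v/(1+v^2).

Lemma pos1 v : 0 < 1 + v^2. Proof. nra. Qed.

Ltac nz := match goal with |- ?a <> 0 => first [apply Rgt_not_eq; nra | apply Rgt_not_eq; simpl; nra | let H := fresh in intro H; nra] end.
Ltac fin v := pose proof (pos1 v); auto_derive; [repeat split; try nz | field; try nz].

Lemma Gf_der v : is_derive Gf v (8*v^2/(1+v^2)^3).
Proof. unfold Gf. fin v. Qed.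
Lemma Ff_der v : is_derive Ff v (2*v^2/(1+v^2)^2).
Proof. unfold Ff. fin v. Qed.
Lemma Ef_der v : is_derive Ef v (2/(1+v^2)^2).
Proof. unfold Ef. fin v. Qed.
Lemma h1_der v : is_derive h1 v (8*v*(1-v^2)/(1+v^2)^3).
Proof. unfold h1. fin v. Qed.

Lemma strict_incr f f' a b : a < b -> (forall c, is_derive f c (f' c)) ->
  (forall c, a < c < b -> 0 < f' c) -> f a < f b.
Proof.
  intros Hab Hd Hp.
  destruct (MVT_cor2 f f' a b Hab) as [c [Hc1 Hc2]].
  { intros c _. apply is_derive_Reals. apply Hd. }
  pose proof (Hp c Hc2). nra.
Qed.

Lemma Gf0 : Gf 0 = 0. Proof. unfold Gf. rewrite atan_0. field. Qed.
Lemma Ff0 : Ff 0 = 0. Proof. unfold Ff. rewrite atan_0. field. Qed.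

Lemma Gf_incr x y : 0 <= x -> x < y -> Gf x < Gf y.
Proof.
  intros. apply (strict_incr Gf (fun v => 8*v^2/(1+v^2)^3)); auto using Gf_der.
  intros c Hc. pose proof (pos1 c). apply Rdiv_lt_0_compat; nra.
Qed.
Lemma Ff_incr x y : 0 <= x -> x < y -> Ff x < Ff y.
Proof.
  intros. apply (strict_incr Ff (fun v => 2*v^2/(1+v^2)^2)); auto using Ff_der.
  intros c Hc. pose proof (pos1 c). apply Rdiv_lt_0_compat; nra.
Qed.
Lemma Ef_incr x y : x < y -> Ef x < Ef y.
Proof.
  intros. apply (strict_incr Ef (fun v => 2/(1+v^2)^2)); auto using Ef_der.
  intros c Hc. pose proof (pos1 c). apply Rdiv_lt_0_compat; nra.
Qed.

Lemma Gf_opp x : Gf (-x) = - Gf x.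
Proof. unfold Gf. rewrite atan_opp. field. pose proof (pos1 x). nz. Qed.

Lemma Gf_nonpos x : x <= 0 -> Gf x <= 0.
Proof.
  intros H. destruct (Req_dec x 0) as [->|Hx]. rewrite Gf0; lra.
  replace x with (- - x) by ring. rewrite Gf_opp.
  pose proof (Gf_incr 0 (-x)). rewrite Gf0 in H0. lra.
Qed.

Lemma Gf_pos x : 0 < x -> 0 < Gf x.
Proof. intros. pose proof (Gf_incr 0 x). rewrite Gf0 in H0. lra. Qed.
Lemma Ff_pos x : 0 < x -> 0 < Ff x.
Proof. intros. pose proof (Ff_incr 0 x). rewrite Ff0 in H0. lra. Qed.

Lemma Gf_inv v : 0 < v -> Gf (/ v) = PI/2 - Gf v.
Proof. intros. unfold Gf. rewrite atan_inv by lra. field. split; try lra. nz. Qed.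
Lemma Ef_inv v : 0 < v -> Ef v = PI/2 - Ff (/ v).
Proof. intros. unfold Ef, Ff. rewrite atan_inv by lra. field. split; try lra. nz. Qed.

Lemma idF v p : Gf v - p*h1 v/2 - Ff v = 2*v^2*(v-p)/(1+v^2)^2.
Proof. unfold Gf, Ff, h1. field; nz. Qed.
Lemma idE v p : Ef v - (Gf v - p*h1 v/2) = 2*v*(1+p*v)/(1+v^2)^2.
Proof. unfold Gf, Ef, h1. field; nz. Qed.

Lemma div_sign a v : 0 <= a / (1+v^2)^2 -> 0 <= a.
Proof.
  intros H. pose proof (pos1 v).
  assert (a = a / (1+v^2)^2 * (1+v^2)^2). { field. nz. } rewrite H1. apply Rmult_le_pos; [auto | left; apply pow_lt; lra].
Qed.
Lemma div_sign' a v : 0 <= a -> 0 <= a / (1+v^2)^2.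
Proof. intros. pose proof (pos1 v). apply Rmult_le_pos; auto. left. apply Rinv_0_lt_compat. nra. Qed.

Lemma omega_abs v0 p0 v p e :
  Omega v0 p0 -> 0 < e <= 1 ->
  p * h1 v = (p0 * h1 v0) * e ->
  Gf v - p * h1 v / 2 = Gf v0 - p0 * h1 v0 / 2 ->
  Omega v p.
Proof.
  intros [Hv0 [Hp1 Hp2]] He Hu HK.
  set (u0 := p0 * h1 v0) in *. set (K := Gf v0 - u0/2) in *.
  assert (Hpv0 : 0 <= 1 + p0*v0).
  { assert (p0 * v0 >= -/v0 * v0) by nra. replace (-/v0*v0) with (-1) in H by (field; lra). lra. }
  assert (HF0 : Ff v0 <= K).
  { pose proof (idF v0 p0). fold u0 in H. cut (0 <= K - Ff v0); [lra|].
    unfold K. rewrite H. apply div_sign'. pose proof (pos1 v0). nra. }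
  assert (HE0 : K <= Ef v0).
  { pose proof (idE v0 p0). fold u0 in H. cut (0 <= Ef v0 - K); [lra|].
    unfold K. rewrite H. apply div_sign'. nra. }
  assert (Hh1 : 0 < h1 v0).
  { unfold h1. pose proof (pos1 v0). apply Rdiv_lt_0_compat; nra. }
  pose proof (Gf_pos v0 Hv0). pose proof (Ff_pos v0 Hv0).
  assert (HGv : 0 < Gf v).
  { destruct (Rle_lt_dec 0 p0).
    - assert (0 <= u0) by (unfold u0; nra). nra.
    - assert (u0 < 0) by (unfold u0; nra). unfold K in HK. nra. }
  assert (Hv : 0 < v).
  { destruct (Rle_lt_dec v 0) as [Hle|]; auto. pose proof (Gf_nonpos v Hle). lra. }
  pose proof (pos1 v).
  assert (HFv : Ff v <= K /\ K <= Ef v).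
  { assert (I1 : Gf v - Ff v = 2 * v ^ 2 * (v - 0) / (1 + v ^ 2) ^ 2) by (unfold Gf, Ff; field; nz).
    assert (I2 : Ef v - Gf v = 2 * v * (1 + 0 * v) / (1 + v ^ 2) ^ 2) by (unfold Gf, Ef; field; nz).
    assert (0 <= 2 * v ^ 2 * (v - 0) / (1 + v ^ 2) ^ 2) by (apply div_sign'; nra).
    assert (0 <= 2 * v * (1 + 0 * v) / (1 + v ^ 2) ^ 2) by (apply div_sign'; nra).
    destruct (Rle_lt_dec 0 p0).
    - assert (0 <= u0) by (unfold u0; nra).
      assert (Hvv : v <= v0).
      { destruct (Rle_lt_dec v v0); auto. pose proof (Gf_incr v0 v). unfold K in HK. nra. }
      assert (Ff v <= Ff v0).
      { destruct Hvv as [Hvv|Hvv]. left. apply Ff_incr; lra. subst. lra. }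
      split. lra. nra.
    - assert (u0 < 0) by (unfold u0; nra).
      assert (Hvv : v0 <= v).
      { destruct (Rle_lt_dec v0 v); auto. pose proof (Gf_incr v v0). unfold K in HK. nra. }
      assert (Ef v0 <= Ef v).
      { destruct Hvv as [Hvv|Hvv]. left. apply Ef_incr; lra. subst. lra. }
      split. nra. lra. }
  destruct HFv as [HF HE].
  pose proof (idF v p) as I1. pose proof (idE v p) as I2.
  rewrite HK in I1, I2. fold K in I1, I2.
  assert (A1 : 0 <= 2 * v ^ 2 * (v - p)) by (apply (div_sign _ v); lra).
  assert (A2 : 0 <= 2 * v * (1 + p * v)) by (apply (div_sign _ v); lra).
  split; auto. split.
  - assert (0 <= 1 + p*v) by nra.
    assert (- / v = (-1) / v) by (field; lra). rewrite H3.
    apply Rmult_le_reg_r with v; auto. unfold Rdiv. rewrite Rmult_assoc, Rinv_l by lra. nra.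
  - assert (0 < 2 * v^2) by nra. destruct (Rle_lt_dec p v) as [|Hl]; auto. assert (2*v^2*(v-p) < 0) by (apply Rmult_pos_neg; lra). lra.
Qed.

Lemma rc_cont (f : R -> R) (x : R) : continuous f x -> filterlim f (at_right x) (locally (f x)).
Proof. intros H. eapply filterlim_filter_le_1; [|exact H]. apply filter_le_within. Qed.

Lemma rc_comp (f h : R -> R) a : filterlim f (at_right 0) (locally a) -> continuous h a ->
  filterlim (fun s => h (f s)) (at_right 0) (locally (h a)).
Proof. intros. eapply filterlim_comp; eauto. Qed.

Lemma rc_mult (f g : R -> R) a b : filterlim f (at_right 0) (locally a) ->
  filterlim g (at_right 0) (locally b) ->
  filterlim (fun s => f s * g s) (at_right 0) (locally (a*b)).
Proof. intros. eapply filterlim_comp_2; eauto. apply (filterlim_mult a b). Qed.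

Lemma rc_plus (f g : R -> R) a b : filterlim f (at_right 0) (locally a) ->
  filterlim g (at_right 0) (locally b) ->
  filterlim (fun s => f s + g s) (at_right 0) (locally (a+b)).
Proof. intros. eapply filterlim_comp_2; eauto. apply (filterlim_plus a b). Qed.

Lemma Rbar_lt_le_trans' (s t : R) (T : Rbar) : s < t -> Rbar_lt t T -> Rbar_lt s T.
Proof. intros. destruct T; simpl in *; auto. lra. Qed.

Lemma const_on (f : R -> R) (T : Rbar) :
  (forall t, 0 < t -> Rbar_lt t T -> is_derive f t 0) ->
  filterlim f (at_right 0) (locally (f 0)) ->
  forall t, 0 < t -> Rbar_lt t T -> f t = f 0.
Proof.
  intros Hd Hl t Ht HT.
  assert (Hc : forall s, 0 < s < t -> f t = f s).
  { intros s Hs.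
    destruct (MVT_cor2 f (fun _ => 0) s t) as [c [Hc1 Hc2]]; try lra.
    intros c Hc. apply is_derive_Reals. apply Hd. lra.
    destruct (Rlt_or_le c t). apply Rbar_lt_le_trans' with t; auto. replace c with t by lra; auto. }
  destruct (Req_dec (f t) (f 0)) as [|Hne]; auto. exfalso.
  assert (He : 0 < Rabs (f t - f 0)) by (apply Rabs_pos_lt; lra).
  apply filterlim_locally with (eps := mkposreal _ He) in Hl.
  destruct Hl as [d Hd'].
  set (s := Rmin (d/2) (t/2)).
  assert (Hs : 0 < s). { unfold s. apply Rmin_glb_lt; destruct d; simpl; lra. }
  assert (Hst : s < t). { unfold s. pose proof (Rmin_r (d/2) (t/2)). lra. }
  assert (Hsd : s < d). { unfold s. pose proof (Rmin_l (d/2) (t/2)). destruct d; simpl in *; lra. }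
  specialize (Hd' s). 
  assert (B : ball 0 d s).
  { change (Rabs (s - 0) < d). rewrite Rminus_0_r, Rabs_pos_eq; lra. }
  specialize (Hd' B Hs). change (Rabs (f s - f 0) < Rabs (f t - f 0)) in Hd'.
  rewrite <- (Hc s) in Hd' by lra. lra.
Qed.

Lemma cont_of (f : R -> R) x : (exists l, is_derive f x l) -> continuous f x.
Proof. intros. apply (ex_derive_continuous (K := R_AbsRing) (V := R_NormedModule)). exact H. Qed.

Lemma invariance (T : Rbar) (vc p : R -> R) v0 p0 :
  Omega v0 p0 -> vc 0 = v0 -> p 0 = p0 -> is_solution_on T vc p ->
  forall t, 0 <= t -> Rbar_lt t T -> Omega (vc t) (p t).
Proof.
  intros HO Hv0 Hp0 [Hd [Hlv Hlp]] t Ht HT.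
  destruct (Req_dec t 0) as [->|Htn]. { rewrite Hv0, Hp0. auto. }
  assert (Htp : 0 < t) by lra.
  set (w := fun s => p s * h1 (vc s) * exp s).
  assert (Hw : w t = w 0).
  { apply (const_on w T); auto.
    - intros s Hs HsT. destruct (Hd s Hs HsT) as [Dp Dv].
      unfold w, h1. auto_derive.
      + repeat split. exists (p s * (p s * Rfun (vc s) - 1)); auto.
        exists (- (p s / 4) * (1 + vc s ^ 2)); auto.
        exists (- (p s / 4) * (1 + vc s ^ 2)); auto. pose proof (pos1 (vc s)). nz.
      + replace (Derive (fun x => p x) s) with (p s * (p s * Rfun (vc s) - 1))
          by (symmetry; apply is_derive_unique; auto).
        replace (Derive (fun x => vc x) s) with (- (p s / 4) * (1 + vc s ^ 2))
          by (symmetry; apply is_derive_unique; auto).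
        unfold Rfun. pose proof (pos1 (vc s)).
        destruct (Req_dec (vc s) 0) as [E|E].
        * rewrite E. generalize (/ 0); intro; field.
        * field. split; auto. nz.
    - unfold w. apply rc_mult. apply rc_mult. auto.
      apply rc_comp; auto. apply cont_of. exists (8*vc 0*(1-vc 0^2)/(1+vc 0^2)^3). apply h1_der.
      apply rc_cont. apply cont_of. exists (exp 0). auto_derive; auto. ring. }
  set (Q := fun s => Gf (vc s) + p s * (- h1 (vc s) / 2)).
  assert (HQ : Q t = Q 0).
  { apply (const_on Q T); auto.
    - intros s Hs HsT. destruct (Hd s Hs HsT) as [Dp Dv].
      unfold Q, Gf, h1. auto_derive.
      + repeat split;
        try (exists (p s * (p s * Rfun (vc s) - 1)); now auto);
        try (exists (- (p s / 4) * (1 + vc s ^ 2)); now auto); try (pose proof (pos1 (vc s)); nz).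
      + replace (Derive (fun x => p x) s) with (p s * (p s * Rfun (vc s) - 1))
          by (symmetry; apply is_derive_unique; auto).
        replace (Derive (fun x => vc x) s) with (- (p s / 4) * (1 + vc s ^ 2))
          by (symmetry; apply is_derive_unique; auto).
        unfold Rfun. pose proof (pos1 (vc s)).
        destruct (Req_dec (vc s) 0) as [E|E].
        * rewrite E. generalize (/ 0); intro; field.
        * field. split; auto. nz.
    - unfold Q. apply rc_plus. apply rc_comp; auto. apply cont_of. eexists; apply Gf_der.
      apply rc_mult; auto. apply (rc_comp vc (fun v => - h1 v / 2)); auto.
      apply cont_of. unfold h1. eexists. auto_derive. pose proof (pos1 (vc 0)). nz. reflexivity. }
  unfold w in Hw. unfold Q in HQ. rewrite Hv0, Hp0, exp_0 in *.
  apply (omega_abs v0 p0 _ _ (exp (-t))); auto.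
  - split. apply exp_pos. rewrite <- exp_0. destruct (Req_dec t 0). lra. left. apply exp_increasing. lra.
  - assert (exp t * exp (-t) = 1) by (rewrite <- exp_plus; replace (t + -t) with 0 by ring; apply exp_0).
    pose proof (exp_pos t). 
    replace (p t * h1 (vc t)) with (p t * h1 (vc t) * exp t * exp (-t)) by (rewrite Rmult_assoc, H; ring).
    rewrite Hw. ring.
  - lra.
Qed.

From Stdlib Require Import Ranalysis5.

Lemma Gf_cont x : continuous Gf x.
Proof. apply cont_of. eexists. apply Gf_der. Qed.

Lemma Gf_inj x y : 0 < x -> 0 < y -> Gf x = Gf y -> x = y.
Proof.
  intros. destruct (Rtotal_order x y) as [H2|[H2|H2]]; auto.
  pose proof (Gf_incr x y). lra. pose proof (Gf_incr y x). lra.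
Qed.

Lemma Gf_inverse a b : 0 < a -> a < b ->
  exists g : R -> R,
    (forall y, Gf a <= y <= Gf b -> a <= g y <= b /\ Gf (g y) = y) /\
    (forall y, Gf a < y < Gf b -> continuity_pt g y /\
        derivable_pt_lim g y (/ (8 * g y ^ 2 / (1 + g y ^ 2) ^ 3))).
Proof.
  intros Ha Hab.
  assert (Hc : forall x, a <= x <= b -> continuity_pt Gf x).
  { intros. apply continuity_pt_filterlim. apply Gf_cont. }
  assert (Hinv : forall y, {x | Gf a <= y <= Gf b -> a <= x <= b /\ Gf x = y}).
  { intro y. destruct (Rle_dec (Gf a) y) as [h1|h1].
    - destruct (Rle_dec y (Gf b)) as [h2|h2].
      + destruct (f_interv_is_interv Gf a b y Hab (conj h1 h2) Hc) as [x Hx].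
        exists x. intros _. exact Hx.
      + exists a. intros [_ H]. lra.
    - exists a. intros [H _]. lra. }
  exists (fun y => proj1_sig (Hinv y)).
  set (g := fun y => proj1_sig (Hinv y)).
  assert (G1 : forall y, Gf a <= y <= Gf b -> a <= g y <= b /\ Gf (g y) = y).
  { intros y Hy. unfold g. destruct (Hinv y) as [x Hx]. simpl. auto. }
  split; auto.
  assert (Hincr : forall x y, a <= x -> x < y -> y <= b -> Gf x < Gf y).
  { intros. apply Gf_incr; lra. }
  assert (HGab : Gf a < Gf b) by (apply Gf_incr; lra).
  assert (Hcomp : forall x, Gf a <= x <= Gf b -> comp Gf g x = id x).
  { intros. unfold comp, id. apply G1; auto. }
  intros y Hy.
  assert (Cg : continuity_pt g y).
  { apply (continuity_pt_recip_interv Gf g a b Hab Hincr); auto.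
    intros. apply G1. lra. }
  split; auto.
  assert (Prf : forall z, g (Gf a) <= z <= g (Gf b) -> derivable_pt Gf z).
  { intros z _. exists (8*z^2/(1+z^2)^3). apply is_derive_Reals. apply Gf_der. }
  assert (Hga : g (Gf a) = a).
  { destruct (G1 (Gf a)) as [[H1 _] H2]. lra. apply Gf_inj; lra. }
  assert (Hgb : g (Gf b) = b).
  { destruct (G1 (Gf b)) as [[H1 _] H2]. lra. apply Gf_inj; lra. }
  assert (Prg_incr : g (Gf a) <= g y <= g (Gf b)).
  { rewrite Hga, Hgb. apply G1. lra. }
  assert (Hgy : a <= g y) by (apply G1; lra).
  pose proof (derive_pt_eq_0 Gf (g y) (8 * g y ^ 2 / (1 + g y ^ 2) ^ 3) (Prf (g y) Prg_incr)
                (proj1 (is_derive_Reals _ _ _) (Gf_der (g y)))) as HD.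
  pose proof (pos1 (g y)).
  assert (0 < 8 * g y ^ 2 / (1 + g y ^ 2) ^ 3) by (apply Rdiv_lt_0_compat; nra).
  pose proof (derivable_pt_lim_recip_interv Gf g (Gf a) (Gf b) y Prf Cg HGab Hy Prg_incr Hcomp) as R.
  rewrite HD in R. change (proj1_sig (Hinv y)) with (g y). replace (/ (8 * g y ^ 2 / (1 + g y ^ 2) ^ 3)) with (1 / (8 * g y ^ 2 / (1 + g y ^ 2) ^ 3)) by (field; split; nz).
  apply R. lra.
Qed.

Lemma existence v0 p0 : Omega v0 p0 ->
  exists vc p : R -> R, vc 0 = v0 /\ p 0 = p0 /\ is_solution_on p_infty vc p.
Proof.
  intros HO. destruct HO as [Hv0 [Hp1 Hp2]].
  set (u0 := p0 * h1 v0). set (K := Gf v0 - u0/2).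
  assert (Hpv0 : 0 <= 1 + p0*v0).
  { assert (p0 * v0 >= -/v0 * v0) by nra. replace (-/v0*v0) with (-1) in H by (field; lra). lra. }
  assert (HF0 : Ff v0 <= K).
  { pose proof (idF v0 p0). fold u0 in H. cut (0 <= K - Ff v0); [lra|].
    unfold K. rewrite H. apply div_sign'. pose proof (pos1 v0). nra. }
  assert (HE0 : K <= Ef v0).
  { pose proof (idE v0 p0). fold u0 in H. cut (0 <= Ef v0 - K); [lra|].
    unfold K. rewrite H. apply div_sign'. nra. }
  assert (HK0 : 0 < K) by (pose proof (Ff_pos v0 Hv0); lra).
  assert (HK1 : K < PI/2).
  { rewrite (Ef_inv v0 Hv0) in HE0. pose proof (Ff_pos (/ v0)). 
    assert (0 < / v0) by (apply Rinv_0_lt_compat; lra). specialize (H H0). lra. }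
  assert (HG0 : 0 < Gf v0 < PI/2).
  { pose proof (Gf_pos v0 Hv0). pose proof (Gf_inv v0 Hv0).
    assert (0 < / v0) by (apply Rinv_0_lt_compat; lra). pose proof (Gf_pos _ H1). lra. }
  set (lo := Rmin K (Gf v0)). set (hi := Rmax K (Gf v0)).
  assert (Hlo : 0 < lo) by (unfold lo; apply Rmin_glb_lt; lra).
  assert (Hhi : hi < PI/2) by (unfold hi; apply Rmax_lub_lt; lra).
  set (m := Rmin lo (PI/2 - hi)).
  assert (Hm : 0 < m) by (unfold m; apply Rmin_glb_lt; lra).
  assert (Hm1 : m <= lo) by apply Rmin_l.
  assert (Hm2 : m <= PI/2 - hi) by apply Rmin_r.
  pose proof (Gf_cont 0) as Hc0.
  apply filterlim_locally with (eps := mkposreal _ Hm) in Hc0.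
  destruct Hc0 as [d Hd].
  set (a := Rmin (d/2) (1/2)).
  assert (Ha0 : 0 < a). { unfold a. apply Rmin_glb_lt; destruct d; simpl; lra. }
  assert (Ha1 : a <= 1/2) by apply Rmin_r.
  assert (Ha2 : a < d). { unfold a. pose proof (Rmin_l (d/2) (1/2)). destruct d; simpl in *; lra. }
  assert (HGa : Gf a < m).
  { assert (B : ball 0 d a). { change (Rabs (a - 0) < d). rewrite Rminus_0_r, Rabs_pos_eq; lra. }
    specialize (Hd a B). change (Rabs (Gf a - Gf 0) < m) in Hd. rewrite Gf0, Rminus_0_r in Hd.
    pose proof (Rle_abs (Gf a)). lra. }
  set (b := / a).
  assert (Hb : 2 <= b).
  { unfold b. replace 2 with (/ (1/2)) by field. apply Rinv_le_contravar; lra. }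
  assert (HGb : Gf b = PI/2 - Gf a) by (unfold b; apply Gf_inv; lra).
  destruct (Gf_inverse a b Ha0 ltac:(lra)) as [g [G1 G2]].
  set (c := fun t => K + u0 * exp (-t) / 2).
  assert (Hc : forall t, 0 <= t -> Gf a < c t < Gf b).
  { intros t Ht. assert (He : 0 < exp (-t) <= 1).
    { split. apply exp_pos. rewrite <- exp_0. destruct (Req_dec t 0). subst. rewrite Ropp_0. lra.
      left. apply exp_increasing. lra. }
    assert (lo <= c t <= hi).
    { unfold c, lo, hi, K. destruct (Rle_lt_dec 0 u0).
      - pose proof (Rmin_l K (Gf v0)). pose proof (Rmax_r K (Gf v0)). fold K. unfold K in *. split; nra.
      - pose proof (Rmin_r K (Gf v0)). pose proof (Rmax_l K (Gf v0)). unfold K in *. split; nra. }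
    fold lo hi. lra. }
  set (vc := fun t => g (c t)).
  assert (Hvc : forall t, 0 <= t -> a <= vc t).
  { intros t Ht. unfold vc. apply G1. pose proof (Hc t Ht). lra. }
  assert (Dc : forall t, is_derive c t (- u0 * exp (-t) / 2)).
  { intros t. unfold c. auto_derive; auto. field. }
  assert (Dv : forall t, 0 <= t -> is_derive vc t ((- u0 * exp (-t) / 2) * / (8 * vc t ^ 2 / (1 + vc t ^ 2) ^ 3))).
  { intros t Ht. unfold vc. apply (is_derive_comp g c t). 
    apply is_derive_Reals. apply G2. apply Hc; auto. apply Dc. }
  set (p := fun t => u0 * exp (-t) * / h1 (vc t)).
  assert (Hh1 : forall t, 0 <= t -> 0 < h1 (vc t)).
  { intros t Ht. pose proof (Hvc t Ht). unfold h1. pose proof (pos1 (vc t)). apply Rdiv_lt_0_compat; nra. }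
  exists vc, p.
  assert (Hc0 : c 0 = Gf v0). { unfold c, K. rewrite Ropp_0, exp_0. field. }
  assert (Hvc0 : vc 0 = v0).
  { unfold vc. rewrite Hc0. apply Gf_inj; auto. pose proof (Hvc 0 ltac:(lra)). unfold vc in H. rewrite Hc0 in H. lra.
    apply G1. rewrite <- Hc0. pose proof (Hc 0 ltac:(lra)). lra. }
  split; auto. split.
  { unfold p. rewrite Hvc0, Ropp_0, exp_0. unfold u0. field. pose proof (Hh1 0 ltac:(lra)). rewrite Hvc0 in H. lra. }
  split; [|split].
  - intros t Ht _. pose proof (Hvc t ltac:(lra)) as Hvt. pose proof (pos1 (vc t)) as P1.
    pose proof (Dv t ltac:(lra)) as Dvt.
    assert (Ev : - u0 * exp (- t) / 2 * / (8 * vc t ^ 2 / (1 + vc t ^ 2) ^ 3) = - (p t / 4) * (1 + vc t ^ 2)).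
    { unfold p, h1. field. split; nz. }
    rewrite Ev in Dvt. split; auto.
    unfold p at 1. unfold h1. auto_derive.
    + repeat split; try (exists (- (p t / 4) * (1 + vc t ^ 2)); now auto); try nz; try (apply Rmult_integral_contrapositive_currified; [nz | apply Rinv_neq_0_compat; nz]).
    + replace (Derive (fun x => vc x) t) with (- (p t / 4) * (1 + vc t ^ 2))
        by (symmetry; apply is_derive_unique; auto).
      unfold p, h1, Rfun. field. split; nz.
  - apply rc_cont. unfold vc. apply continuous_comp.
    + apply cont_of. eexists. apply Dc.
    + rewrite Hc0. apply continuity_pt_filterlim. apply G2. rewrite <- Hc0. apply Hc. lra.
  - unfold p. apply rc_mult.
    + apply rc_cont with (f := fun t => u0 * exp (-t)). apply cont_of. eexists. auto_derive; auto.
    + apply rc_comp with (h := fun v => / h1 v).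
      * apply rc_cont. unfold vc. apply continuous_comp.
        -- apply cont_of. eexists. apply Dc.
        -- apply continuity_pt_filterlim. apply G2. apply Hc. lra.
      * apply cont_of. rewrite Hvc0. pose proof (pos1 v0). unfold h1. eexists. auto_derive.
        repeat split; try nz; try (apply Rmult_integral_contrapositive_currified; [nz | apply Rinv_neq_0_compat; nz]). reflexivity.
Qed.

Theorem theoremA1 :
  forall v0 p0 : R, Omega v0 p0 ->
    (* global existence of a solution staying in Omega *)
    (exists vc p : R -> R,
        vc 0 = v0 /\ p 0 = p0 /\ is_solution_on p_infty vc p /\
        (forall t : R, 0 <= t -> Omega (vc t) (p t))) /\
    (* invariance: every solution on any [0,T) stays in Omega *)
    (forall (T : Rbar) (vc p : R -> R),
        vc 0 = v0 -> p 0 = p0 -> is_solution_on T vc p ->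
        forall t : R, 0 <= t -> Rbar_lt t T -> Omega (vc t) (p t)).
Proof.
  intros v0 p0 HO. split.
  - destruct (existence v0 p0 HO) as [vc [p [H1 [H2 H3]]]].
    exists vc, p. split; [auto|split; [auto|split; [auto|]]].
    intros t0 Ht0. apply (invariance p_infty vc p v0 p0); auto. exact I.
  - intros T vc p H1 H2 H3. apply (invariance T vc p v0 p0); auto.
Qed.
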